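(* Let $G=K_{s}^{t}$ with $2\leq t\leq s$ and $n=s+t$, and let $P_{D}(\lambda)=\det(\lambda I-D(G))$. If $s\geq t+1$, then $$P_{D}(\lambda)=(\lambda+1)^{s-t-1}(\lambda+2-\sqrt{2})^{t-1}(\lambda+2+\sqrt{2})^{t-1}\big[\lambda^{3}+(5-s-3t)\lambda^{2}+(6-4s-2t-st)\lambda+2-2s-st\big].$$ If $s=t$, then $$P_{D}(\lambda)=(\lambda+2-\sqrt{2})^{t-1}(\lambda+2+\sqrt{2})^{t-1}\big[\lambda^{2}+(4-4t)\lambda+2-2t-t^{2}\big].$$
   Context: $D(G)$ is the distance matrix of $G$. $K_{s}^{t}$ ($2\le t\le s$) denotes the graph on $n=s+t$ vertices obtained from the complete graph $K_s$ by attaching a pendant edge (a new vertex of degree 1) to each of $t$ distinct vertices of $K_s$. *)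

(* Defs.v *)
From mathcomp Require Import all_boot all_order all_algebra.
Set Implicit Arguments. Unset Strict Implicit. Unset Printing Implicit Defensive.
Import Order.TTheory GRing.Theory Num.Theory.
Local Open Scope ring_scope.

Definition walk_ball (T : finType) (e : rel T) (k : nat) (u : T) : {set T} :=
  iter k (fun A : {set T} => A :|: [set y | [exists x in A, e x y]]) [set u].

(* Graph distance: least k such that v is within k steps of u
   (equals #|T| if v is unreachable; irrelevant for connected graphs). *)
Definition gdist (T : finType) (e : rel T) (u v : T) : nat :=
  find (fun k => v \in walk_ball e k u) (iota 0 #|T|).

Definition dist_matrix (R : nzRingType) (n : nat) (e : rel 'I_n) : 'M[R]_n :=
  \matrix_(i, j) (gdist e i j)%:R.

(* K_s^t on vertices {0,...,s+t-1}: vertices 0..s-1 form K_s, and for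
   j < t vertex s+j is a pendant vertex attached to vertex j. *)
Arguments dist_matrix : clear implicits.
Definition Kst_adj (s t : nat) : rel 'I_(s + t) :=
  fun u v =>
    [|| [&& (val u < s)%N, (val v < s)%N & val u != val v],
        [&& (val u < t)%N & val v == (val u + s)%N] |
        [&& (val v < t)%N & val u == (val v + s)%N] ].
Arguments Kst_adj : clear implicits.

(* Main.v *)
Require Import Defs.
From mathcomp Require Import all_boot all_order all_algebra.
From mathcomp Require Import zify ring.
Import Order.TTheory GRing.Theory Num.Theory.
Set Implicit Arguments. Unset Strict Implicit. Unset Printing Implicit Defensive.

Definition cls (s w : nat) := if (w < s)%N then w else (w - s)%N.
Definition dd s (u v : nat) : nat :=
  if u == v then 0%N else if cls s u == cls s v then 1%N else
  if (u < s)%N then (if (v < s)%N then 1%N else 2%N) else (if (v < s)%N then 2%N else 3%N).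
Definition adjn (s t x v : nat) : bool :=
 [|| [&& (x < s)%N, (v < s)%N & x != v],
        [&& (x < t)%N & v == (x + s)%N] |
        [&& (v < t)%N & x == (v + s)%N] ].
Definition prd s (u v : nat) : nat :=
  if cls s u == cls s v then u else if (s <= v)%N then (v - s)%N
  else if (s <= u)%N then (u - s)%N else u.

Lemma adj_dd s t u x v : (u < s + t)%N -> (x < s+t)%N -> (v < s+t)%N -> (t <= s)%N ->
  adjn s t x v -> (dd s u v <= dd s u x + 1)%N.
Proof. rewrite /adjn /dd /cls. repeat case: ifP; lia. Qed.

Lemma prd_ok s t u v : (u < s + t)%N -> (v < s+t)%N -> (t <= s)%N -> u != v ->
  [&& (prd s u v < s + t)%N, adjn s t (prd s u v) v & dd s u (prd s u v) + 1 == dd s u v].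
Proof. rewrite /adjn /dd /prd /cls. repeat case: ifP; lia. Qed.

Lemma dd_le3 s t u v : (u < s + t)%N -> (v < s+t)%N -> (t <= s)%N -> (dd s u v <= 3)%N.
Proof. rewrite /dd /cls. repeat case: ifP; lia. Qed.

Lemma ball_dd s t (H : (t <= s)%N) k (u v : 'I_(s+t)) :
  (v \in walk_ball (Kst_adj s t) k u) = (dd s u v <= k)%N.
Proof.
elim: k v => [|k IH] v.
  rewrite /walk_ball /= inE /dd; case: eqP => [->|ne]; first by rewrite eqxx.
  case: ifP => [/eqP e|]; first by case: ne; apply: val_inj.
  by repeat case: ifP.
rewrite /walk_ball iterS -/(walk_ball _ k u) !inE IH.
apply/idP/idP.
  case/orP => [h|]; first lia.
  case/existsP => x /andP [xin exv]; rewrite IH in xin.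
  have := adj_dd (ltn_ord u) (ltn_ord x) (ltn_ord v) H exv; lia.
move=> h; case: (leqP (dd s u v) k) => hk; first by apply/orP; left.
have uv : (val u != val v).
  apply/negP => /eqP e; move: hk; rewrite /dd e eqxx; lia.
case/and3P: (prd_ok (ltn_ord u) (ltn_ord v) H uv) => hx ha /eqP hd.
apply/existsP; exists (Ordinal hx); rewrite IH /=; apply/andP; split; first lia.
exact: ha.
Qed.

Lemma find_iota (p : pred nat) m N : (m < N)%N -> (forall k, p k = (m <= k)%N) ->
  find p (iota 0 N) = m.
Proof.
move=> hm hp; rewrite -(subnKC (ltnW hm)) iotaD find_cat.
have -> : has p (iota 0 m) = false.
  apply/negbTE/hasPn => k; rewrite mem_iota => /andP [_ hk]; rewrite hp; lia.
rewrite size_iota add0n.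
have -> : (N - m = (N - m).-1.+1)%N by lia.
by rewrite /= hp leqnn addn0.
Qed.

Lemma gdist_K s t (H2 : (2 <= t)%N) (H : (t <= s)%N) (u v : 'I_(s+t)) :
  gdist (Kst_adj s t) u v = dd s u v.
Proof.
rewrite /gdist card_ord; apply: find_iota.
  have := dd_le3 (ltn_ord u) (ltn_ord v) H; lia.
by move=> k; rewrite ball_dd.
Qed.

Local Open Scope ring_scope.

Lemma lowrank (R : comUnitRingType) n m (A Ai : 'M[R]_n) (U : 'M[R]_(n, m)) (B : 'M[R]_(m, n)) :
  A *m Ai = 1%:M -> \det (A - U *m B) = \det A * \det (1%:M - B *m (Ai *m U)).
Proof.
move=> hA.
have e1 : block_mx A U B 1%:M = block_mx 1%:M U 0 1%:M *m block_mx (A - U *m B) 0 B 1%:M.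
  by rewrite mulmx_block ?mul1mx ?mul0mx ?mulmx0 ?mulmx1 ?add0r ?addr0 subrK.
have e2 : block_mx A U B 1%:M = block_mx A 0 B (1%:M - B *m (Ai *m U)) *m block_mx 1%:M (Ai *m U) 0 1%:M.
  rewrite mulmx_block ?mul1mx ?mul0mx ?mulmx0 ?mulmx1 ?addr0 ?add0r mulmxA hA mul1mx.
  by rewrite addrC subrK.
have := congr1 determinant e1; rewrite e2 !det_mulmx det_ublock det_lblock det_ublock det_lblock !det1 !mulr1 mul1r.
by move=> ->.
Qed.

Lemma det2 (R : comNzRingType) (M : 'M[R]_2) : \det M = M 0 0 * M 1 1 - M 0 1 * M 1 0.
Proof.
rewrite (expand_det_row _ 0) !big_ord_recl big_ord0 /cofactor !det_mx11 !mxE /=.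
rewrite /bump /= addr0 expr0 expr1 !mul1r mulN1r mulrN.
congr (M _ _ * M _ _ - M _ _ * M _ _); exact: val_inj.
Qed.

Section S.
Variable R : fieldType.

Lemma sum_pair (g : nat -> R) s t m : (t <= s)%N -> (m < s)%N ->
  (forall k, (k < s + t)%N -> cls s k != m -> g k = 0) ->
  \sum_(k < s + t) g k = g m + (if (m < t)%N then g (m + s)%N else 0).
Proof.
move=> ht hm H.
have hm' : (m < s + t)%N by lia.
rewrite (bigD1 (Ordinal hm')) //=; congr (_ + _).
case: ifP => hmt.
  have hm2 : (m + s < s + t)%N by lia.
  rewrite (bigD1 (Ordinal hm2)) /=; last by rewrite -val_eqE /=; lia.
  rewrite big1 ?addr0 // => k /andP [k1 k2]; apply: H => //.
  move: k1 k2; rewrite -!val_eqE /= /cls; case: ifP; lia.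
rewrite big1 // => k k1; apply: H => //.
have := ltn_ord k; move: k1; rewrite -!val_eqE /= /cls; case: ifP; lia.
Qed.

Lemma sum3 (g : nat -> R) s t a b c : (t <= s)%N ->
  (forall k, (k < s + t)%N -> g k = if (k < t)%N then a else if (k < s)%N then b else c) ->
  \sum_(k < s + t) g k = a *+ t + b *+ (s - t) + c *+ t.
Proof.
move=> ht H.
rewrite -(big_mkord xpredT g) (big_cat_nat (n:=t)) ?leq_addl //=.
rewrite (big_cat_nat (m:=t) (n:=s) (p:=s+t)) ?leq_addr //= addrA.
rewrite (@eq_big_nat _ _ _ 0 t g (fun=> a)); last first.
  move=> k hk; rewrite H; last lia.
  by repeat case: ifP => ? //; lia.
rewrite (@eq_big_nat _ _ _ t s g (fun=> b)); last first.
  move=> k hk; rewrite H; last lia.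
  by repeat case: ifP => ? //; lia.
rewrite (@eq_big_nat _ _ _ s (s + t) g (fun=> c)); last first.
  move=> k hk; rewrite H; last lia.
  by repeat case: ifP => ? //; lia.
by rewrite !sumr_const_nat subn0 addKn.
Qed.

Lemma prod2 (g : nat -> R) s t a b :
  (forall k, (k < s + t)%N -> g k = if (k < s)%N then a else b) ->
  \prod_(k < s + t) g k = a ^+ s * b ^+ t.
Proof.
move=> H.
rewrite -(big_mkord xpredT g) (big_cat_nat (n:=s)) ?leq_addr //=.
rewrite (@eq_big_nat _ _ _ 0 s g (fun=> a)); last first.
  move=> k hk; rewrite H; last lia.
  by repeat case: ifP => ? //; lia.
rewrite (@eq_big_nat _ _ _ s (s + t) g (fun=> b)); last first.
  move=> k hk; rewrite H; last lia.
  by repeat case: ifP => ? //; lia.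
by rewrite !prodr_const_nat subn0 addKn.
Qed.
End S.

Local Open Scope ring_scope.

Section M.
Variable R : numFieldType.
Variables (s t : nat) (x : R).
Hypothesis ht2 : (2 <= t)%N.
Hypothesis hts : (t <= s)%N.
Hypothesis hx : 0 < x.

Definition qf := x * x + 4 * x + 2.
Definition Af (u v : nat) : R :=
  if u == v then x + (if (u < s)%N then 1 else 3) else if cls s u == cls s v then 1 else 0.
Definition Uf (u j : nat) : R :=
  if j == 0%N then (if (u < s)%N then 1 else 0) else (if (u < s)%N then 0 else 1).
Definition Bf (i v : nat) : R :=
  if i == 0%N then (if (v < s)%N then 1 else 2) else (if (v < s)%N then 2 else 3).
Definition Aif (u v : nat) : R :=
  if cls s u == cls s v then
    (if u == v then (if (u < t)%N then (x + 3) / qf else if (u < s)%N then 1 / (x + 1)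
                     else (x + 1) / qf) else - 1 / qf) else 0.
Definition Yf (u j : nat) : R :=
  if j == 0%N then (if (u < t)%N then (x + 3) / qf else if (u < s)%N then 1 / (x + 1) else - 1 / qf)
  else (if (u < t)%N then - 1 / qf else if (u < s)%N then 0 else (x + 1) / qf).
Definition Ltf (k v : nat) : R :=
  if k == v then 1 else if (s <= v)%N && (k == v - s)%N then - 1 / (x + 1) else 0.

Definition Amx : 'M[R]_(s + t) := \matrix_(u, v) Af u v.
Definition Aimx : 'M[R]_(s + t) := \matrix_(u, v) Aif u v.
Definition Umx : 'M[R]_(s + t, 2) := \matrix_(u, j) Uf u j.
Definition Bmx : 'M[R]_(2, s + t) := \matrix_(i, v) Bf i v.
Definition Ltmx : 'M[R]_(s + t) := \matrix_(u, v) Ltf u v.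

Lemma qf_neq0 : qf != 0.
Proof. rewrite /qf; apply/lt0r_neq0; apply: addr_gt0; last by []. 
  by apply: addr_gt0; [apply: mulr_gt0 | apply: mulr_gt0].
Qed.
Lemma x1_neq0 : x + 1 != 0.
Proof. by apply/lt0r_neq0; apply: addr_gt0. Qed.

Lemma key_dist : x%:M - dist_matrix R (s + t) (Kst_adj s t) = Amx - Umx *m Bmx.
Proof.
apply/matrixP => u v; rewrite !mxE gdist_K // !big_ord_recl big_ord0 !mxE /=.
rewrite mulrb -[u == v]val_eqE /Af /Uf /Bf /dd /=.
have := ltn_ord u; have := ltn_ord v; move: (nat_of_ord u) (nat_of_ord v) => a b hb ha.
rewrite /cls; case: (ltnP a s) => ?; case: (ltnP b s) => ? /=;
repeat case: ifP => ? //=; try (exfalso; lia); ring.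
Qed.

Lemma cls_lt u : (u < s + t)%N -> (cls s u < s)%N.
Proof. rewrite /cls; case: ifP; lia. Qed.
Lemma clsDs k : cls s (k + s) = k.
Proof. rewrite /cls; case: ifP; lia. Qed.
Lemma cls_small k : (k < s)%N -> cls s k = k.
Proof. rewrite /cls; case: ifP; lia. Qed.
Lemma cls_big k : (s <= k)%N -> cls s k = (k - s)%N.
Proof. rewrite /cls; case: ifP; lia. Qed.

Lemma cls_sub k : (k < s + t)%N -> (s <= k)%N -> cls s (k - s) = (k - s)%N.
Proof. rewrite /cls; case: ifP; lia. Qed.

Ltac crushn a b ha hb hq h1 :=
 case: (ltnP a s) => ?; [rewrite ?(cls_small (k:=a)) //| rewrite ?(cls_big (k:=a)) // ?(cls_sub ha) //];
 (case: (ltnP b s) => ?; [rewrite ?(cls_small (k:=b)) //| rewrite ?(cls_big (k:=b)) // ?(cls_sub hb) //]);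
 repeat case: ifP => ? //=; try (exfalso; lia); try (rewrite /qf; field; rewrite ?hq ?h1; done).

Lemma A_inv : Amx *m Aimx = 1%:M.
Proof.
apply/matrixP => u v; rewrite /Amx /Aimx !mxE.
under eq_bigr do rewrite !mxE.
have E := @sum_pair R (fun k => Af u k * Aif k v) s t (cls s u) hts (cls_lt (ltn_ord u)).
cbv beta in E; rewrite E; last first.
  move=> k hk hc; rewrite /Af; case: eqP => [e|_]; first by rewrite e eqxx in hc.
  by rewrite eq_sym (negbTE hc) mul0r.
rewrite mulrb -[u == v]val_eqE /Af /Aif /= ?clsDs.
have := ltn_ord u; have := ltn_ord v; move: (nat_of_ord u) (nat_of_ord v) => a b hb ha.
have hq : x * x + 4 * x + 2 != 0 := qf_neq0.  have h1 := x1_neq0.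
crushn a b ha hb hq h1.
Qed.

Lemma Y_eq : Aimx *m Umx = \matrix_(u, j) Yf u j.
Proof.
apply/matrixP => u j; rewrite /Umx /Aimx !mxE.
under eq_bigr do rewrite !mxE.
have E := @sum_pair R (fun k => Aif u k * Uf k j) s t (cls s u) hts (cls_lt (ltn_ord u)).
cbv beta in E; rewrite E; last first.
  move=> k hk hc; rewrite /Aif eq_sym (negbTE hc) mul0r //.
rewrite /Aif /Uf /Yf /= ?clsDs.
have := ltn_ord u; have := ltn_ord j; move: (nat_of_ord u) (nat_of_ord j) => a c hc ha.
have hb : (a < s + t)%N := ha.
have hq : x * x + 4 * x + 2 != 0 := qf_neq0.  have h1 := x1_neq0.
case: c hc => [|[|//]] _; crushn a a ha hb hq h1.
Qed.

Definition Gf (i j : nat) : R :=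
  (if i == 0%N then 1 else 2) * (if j == 0%N then (x + 3) / qf else - 1 / qf) * t%:R
  + (if i == 0%N then 1 else 2) * (if j == 0%N then 1 / (x + 1) else 0) * (s - t)%:R
  + (if i == 0%N then 2 else 3) * (if j == 0%N then - 1 / qf else (x + 1) / qf) * t%:R.

Lemma BY_entry (i j : 'I_2) : (Bmx *m \matrix_(u, j) Yf u j) i j = Gf i j.
Proof.
rewrite /Bmx !mxE; under eq_bigr do rewrite !mxE.
have E := @sum3 R (fun k => Bf i k * Yf k j) s t
  ((if nat_of_ord i == 0%N then 1 else 2) * (if nat_of_ord j == 0%N then (x + 3) / qf else - 1 / qf))
  ((if nat_of_ord i == 0%N then 1 else 2) * (if nat_of_ord j == 0%N then 1 / (x + 1) else 0))
  ((if nat_of_ord i == 0%N then 2 else 3) * (if nat_of_ord j == 0%N then - 1 / qf else (x + 1) / qf)) hts.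
cbv beta in E; rewrite E; last first.
  move=> k hk; rewrite /Bf /Yf.
  by repeat case: ifP => ? //=; try (exfalso; lia).
by rewrite /Gf !mulr_natr.
Qed.

Definition Cf (u v : nat) : R :=
  if u == v then (if (u < s)%N then x + 1 else qf / (x + 1))
  else if (v < u)%N && (cls s u == cls s v) then 1 else 0.

Lemma C_entry (u v : 'I_(s + t)) : (Amx *m Ltmx) u v = Cf u v.
Proof.
rewrite /Amx /Ltmx !mxE.
under eq_bigr do rewrite !mxE.
have E := @sum_pair R (fun k => Af u k * Ltf k v) s t (cls s v) hts (cls_lt (ltn_ord v)).
cbv beta in E; rewrite E; last first.
  move=> k hk hc; rewrite /Ltf; case: eqP => [e|_]; first by rewrite e eqxx in hc.
  case: ifP => [/andP [h1 /eqP h2]|_]; last by rewrite mulr0.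
  by move: hc; rewrite h2 (cls_big h1) (cls_sub (ltn_ord v) h1) eqxx.
rewrite /Af /Ltf /Cf /= ?clsDs.
have := ltn_ord u; have := ltn_ord v; move: (nat_of_ord u) (nat_of_ord v) => a b hb ha.
have hq : x * x + 4 * x + 2 != 0 := qf_neq0.  have h1 := x1_neq0.
crushn a b ha hb hq h1.
Qed.

Lemma detA : \det Amx = (x + 1) ^+ s * (qf / (x + 1)) ^+ t.
Proof.
have hL : \det Ltmx = 1.
  rewrite -det_tr det_trig; last first.
    apply/is_trig_mxP => i j hij; rewrite !mxE /Ltf.
    case: ifP => [/eqP e|_]; first by move: hij; rewrite ltn_neqAle e eqxx.
    case: ifP => // /andP [h1 /eqP h2]; move: hij; rewrite h2; lia.
  by rewrite big1 // => i _; rewrite !mxE /Ltf eqxx.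
have := det_mulmx Amx Ltmx; rewrite hL mulr1 => <-.
rewrite det_trig; last first.
  apply/is_trig_mxP => i j hij; rewrite C_entry /Cf.
  case: ifP => [/eqP e|_]; first by move: hij; rewrite ltn_neqAle e eqxx.
  case: ifP => // /andP [h1 _]; lia.
have E := @prod2 R (fun k => Cf k k) s t (x + 1) (qf / (x + 1)).
cbv beta in E; rewrite -E; last by move=> k _; rewrite /Cf eqxx.
by apply: eq_bigr => i _; rewrite C_entry.
Qed.

End M.
Local Open Scope ring_scope.

Lemma poly_eq_pos (R : numFieldType) (p q : {poly R}) :
  (forall x : R, 0 < x -> p.[x] = q.[x]) -> p = q.
Proof.
move=> H; apply/eqP; rewrite -subr_eq0; apply/eqP.
apply: (@roots_geq_poly_eq0 _ _ [seq (i.+1)%:R | i <- iota 0 (size (p - q))]).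
- apply/allP => y /mapP [i _ ->]; rewrite /root hornerD hornerN H ?subrr //.
- rewrite map_inj_uniq ?iota_uniq // => i j /eqP; rewrite eqr_nat => /eqP [].
  done.
- by rewrite size_map size_iota.
Qed.

Lemma horner_char (R : comNzRingType) n (M : 'M[R]_n) (x : R) :
  (char_poly M).[x] = \det (x%:M - M).
Proof.
rewrite /char_poly -horner_evalE -det_map_mx; congr (\det _).
apply/matrixP => i j; rewrite !mxE /horner_evalE.
by rewrite rmorphB rmorphMn /= !horner_evalE hornerX hornerC.
Qed.

Lemma det_main (R : numFieldType) s t (x : R) : (2 <= t)%N -> (t <= s)%N -> 0 < x ->
  \det (x%:M - dist_matrix R (s + t) (Kst_adj s t)) =
  (x + 1) ^+ s * (qf x / (x + 1)) ^+ t *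
  ((1 - Gf s t x 0 0) * (1 - Gf s t x 1 1) - Gf s t x 0 1 * Gf s t x 1 0).
Proof.
move=> h2 hts hx.
have E : forall i j, (1%:M - Bmx R s t *m \matrix_(u, j) Yf s t x u j) i j = (i == j)%:R - Gf s t x i j.
  by move=> i j; rewrite -(BY_entry h2 hts hx i j) !mxE.
rewrite (key_dist h2 hts hx) (lowrank _ _ (A_inv h2 hts hx)) (detA h2 hts hx) (Y_eq h2 hts hx) det2 !E /=.
by rewrite !sub0r mulrNN.
Qed.

Lemma Ex1 (R : numFieldType) (y : R) (k m : nat) : y + 1 != 0 ->
  (y + 1) ^+ (k + m.+1 + 1) * (qf y / (y + 1)) ^+ m.+1 =
  (y + 1) ^+ k * qf y ^+ m * ((y + 1) * qf y).
Proof.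
move=> h1; rewrite expr_div_n !exprD !exprS ?expr1.
set Z := (y + 1) ^+ k; set W := (y + 1) ^+ m; set Q := qf y ^+ m.
have hW : W != 0 by rewrite expf_neq0.
by rewrite expr0 mulr1; field; rewrite hW h1.
Qed.

Theorem lemma3p1 (R : rcfType) (s t : nat) :
  (2 <= t)%N -> (t <= s)%N ->
  let P := char_poly (dist_matrix R (s + t) (Kst_adj s t)) in
  ((t + 1 <= s)%N ->
    P = ('X + 1) ^+ (s - t - 1)
        * ('X + (2 - Num.sqrt 2)%:P) ^+ (t - 1)
        * ('X + (2 + Num.sqrt 2)%:P) ^+ (t - 1)
        * ('X ^+ 3 + (5 - s%:R - 3 * t%:R)%:P * 'X ^+ 2
           + (6 - 4 * s%:R - 2 * t%:R - s%:R * t%:R)%:P * 'X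
           + (2 - 2 * s%:R - s%:R * t%:R)%:P)) /\
  (s = t ->
    P = ('X + (2 - Num.sqrt 2)%:P) ^+ (t - 1)
        * ('X + (2 + Num.sqrt 2)%:P) ^+ (t - 1)
        * ('X ^+ 2 + (4 - 4 * t%:R)%:P * 'X + (2 - 2 * t%:R - t%:R ^+ 2)%:P)).
Proof.
move=> h2 hts P.
have hr : Num.sqrt (2 : R) ^+ 2 = 2 by rewrite sqr_sqrtr // ler0n.
have hab : forall y : R, (y + (2 - Num.sqrt 2)) * (y + (2 + Num.sqrt 2)) = qf y.
  move=> y; apply/eqP; rewrite -subr_eq0.
  have -> : (y + (2 - Num.sqrt 2)) * (y + (2 + Num.sqrt 2)) - qf y = 2 - Num.sqrt 2 ^+ 2.
    by rewrite /qf; ring.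
  by rewrite hr subrr.
split.
- move=> hs; apply: poly_eq_pos => y hy.
  rewrite /P horner_char (det_main h2 hts hy) !(hornerM, horner_exp, hornerD, hornerX, hornerC).
  have h1 : y + 1 != 0 by rewrite lt0r_neq0 // addr_gt0.
  have hq : y * y + 4 * y + 2 != 0.
    by rewrite lt0r_neq0 // !addr_gt0 // ?mulr_gt0.
  have := Ex1 (s - t - 1) (t - 1) h1.
  rewrite (_ : (s - t - 1 + (t - 1).+1 + 1)%N = s); last by lia.
  rewrite (_ : (t - 1).+1 = t); last by lia.
  move=> ->.
  rewrite [qf y ^+ _](_ : _ = (y + (2 - Num.sqrt 2)) ^+ (t - 1) * (y + (2 + Num.sqrt 2)) ^+ (t - 1));
    last by rewrite -exprMn hab.
  set Z := (y + 1) ^+ _; set A := (y + (2 - Num.sqrt 2)) ^+ _; set B := (y + (2 + Num.sqrt 2)) ^+ _.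
  rewrite /Gf /qf natrB //=.
  by field; rewrite hq h1.
- move=> est; subst s; apply: poly_eq_pos => y hy.
  rewrite /P horner_char (det_main h2 hts hy) !(hornerM, horner_exp, hornerD, hornerX, hornerC).
  have h1 : y + 1 != 0 by rewrite lt0r_neq0 // addr_gt0.
  have hq : y * y + 4 * y + 2 != 0.
    by rewrite lt0r_neq0 // !addr_gt0 // ?mulr_gt0.
  rewrite -exprMn (mulrC (y + 1)) divfK // -exprMn hab.
  have -> : qf y ^+ t = qf y ^+ (t - 1) * qf y by rewrite -exprSr; congr (_ ^+ _); lia.
  set Q := qf y ^+ _.
  rewrite /Gf /qf subnn /=.
  by field; rewrite hq h1.
Qed.
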